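(* The inclusion $\mathrm{CDUS}(\Pi)\subseteq\mathrm{PF}(\Pi)$ does not hold in general: there exists a (finite) family of policies $\Pi$ such that $\mathrm{CDUS}(\Pi)\not\subseteq\mathrm{PF}(\Pi)$.
   Context: A family of policies $\Pi=\{\pi_1,\pi_2,\dots\}$ of a multi-objective decision problem with $d$ objectives is given, each $\pi$ having a random return vector $\mathbf{Z}^\pi\in\mathbb{R}^d$ with finite mean $\mathbf{V}^\pi=\mathbb{E}[\mathbf{Z}^\pi]$; the return distributions of the policies may be arbitrary (e.g. finitely supported). For $\mathbf{x},\mathbf{y}\in\mathbb{R}^d$: $\mathbf{y}\preceq_p\mathbf{x}$ iff $y_i\le x_i$ for all $i$; $\mathbf{x}\succ_p\mathbf{y}$ iff $x_i\ge y_i$ for all $i$ and $x_i>y_i$ for some $i$. CDF: $F_{\mathbf{X}}(\mathbf{x})=P(\mathbf{X}\preceq_p\mathbf{x})$; $\mathbf{X}\succeq_{\mathrm{FSD}}\mathbf{Y}$ iff $F_{\mathbf{X}}\le F_{\mathbf{Y}}$ pointwise, $\succ_{\mathrm{FSD}}$ additionally requiring strict inequality somewhere; $\mathbf{X}\succ_d\mathbf{Y}$ iff $\mathbf{X}\succeq_{\mathrm{FSD}}\mathbf{Y}$ and $X_j\succ_{\mathrm{FSD}}Y_j$ for some marginal $j$. For weights $\lambda\in\Delta^{|\Pi|}$ (probability vectors), $\sum_i\lambda_i\mathbf{Z}^{\pi_i}$ is the mixture distribution with CDF $\sum_i\lambda_iF_{\mathbf{Z}^{\pi_i}}$. $\mathrm{PF}(\Pi)=\{\pi\in\Pi:\nexists\pi'\in\Pi,\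 \mathbf{V}^{\pi'}\succ_p\mathbf{V}^\pi\}$; $\mathrm{CDUS}(\Pi)=\{\pi\in\Pi:\nexists\lambda\in\Delta^{|\Pi|},\ \sum_i\lambda_i\mathbf{Z}^{\pi_i}\succ_d\mathbf{Z}^\pi\}$. *)

(* Defs.v *)
From mathcomp Require Import all_boot all_order all_algebra.
From mathcomp Require Import reals.
Set Implicit Arguments. Unset Strict Implicit. Unset Printing Implicit Defensive.
Import Order.TTheory GRing.Theory Num.Theory.
Local Open Scope ring_scope.

Section Defs.
Variables (R : realType) (d : nat).

(* A finitely supported return distribution on R^d: a list of
   (probability weight, atom) pairs. *)
Definition fdist := seq (R * 'rV[R]_d).

Definition is_dist (p : fdist) : Prop :=
  (forall wx, wx \in p -> 0 <= wx.1) /\ \sum_(wx <- p) wx.1 = 1.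

Definition mean (p : fdist) : 'rV[R]_d := \sum_(wx <- p) wx.1 *: wx.2.

Definition le_p (y x : 'rV[R]_d) : bool := [forall i, y 0 i <= x 0 i].

Definition succ_p (x y : 'rV[R]_d) : Prop :=
  (forall i, y 0 i <= x 0 i) /\ exists i, y 0 i < x 0 i.

Definition cdf (p : fdist) (x : 'rV[R]_d) : R :=
  \sum_(wx <- p | le_p wx.2 x) wx.1.

Definition mcdf (p : fdist) (j : 'I_d) (t : R) : R :=
  \sum_(wx <- p | wx.2 0 j <= t) wx.1.

Variable n : nat.

Definition in_simplex (lam : 'I_n -> R) : Prop :=
  (forall i, 0 <= lam i) /\ \sum_(i < n) lam i = 1.

Definition mix_cdf (lam : 'I_n -> R) (Pi : 'I_n -> fdist) (x : 'rV[R]_d) : R :=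
  \sum_(i < n) lam i * cdf (Pi i) x.
Definition mix_mcdf (lam : 'I_n -> R) (Pi : 'I_n -> fdist) (j : 'I_d) (t : R) : R :=
  \sum_(i < n) lam i * mcdf (Pi i) j t.

(* Distributional dominance  sum_i lam_i Z^{pi_i}  >_d  Z^pi :
   joint FSD (F_mix <= F_pi everywhere) and strict FSD of some marginal. *)
Definition mix_succ_d (lam : 'I_n -> R) (Pi : 'I_n -> fdist) (p : fdist) : Prop :=
  (forall x, mix_cdf lam Pi x <= cdf p x) /\
  exists j : 'I_d,
    (forall t, mix_mcdf lam Pi j t <= mcdf p j t) /\
    exists t, mix_mcdf lam Pi j t < mcdf p j t.

Definition inPF (Pi : 'I_n -> fdist) (k : 'I_n) : Prop :=
  ~ exists k' : 'I_n, succ_p (mean (Pi k')) (mean (Pi k)).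

Definition inCDUS (Pi : 'I_n -> fdist) (k : 'I_n) : Prop :=
  ~ exists lam : 'I_n -> R, in_simplex lam /\ mix_succ_d lam Pi (Pi k).

End Defs.

(* Main.v *)
Require Import Defs.
From mathcomp Require Import all_boot all_order all_algebra.
From mathcomp Require Import reals.
From mathcomp Require Import lra.
Import Order.TTheory GRing.Theory Num.Theory.
Local Open Scope ring_scope.

Section Ex.
Variable R : realType.

Definition c (a : R) : 'rV[R]_1 := const_mx a.
Definition p0 : fdist R 1 := [:: (1/2, c 0); (1/2, c 4)].
Definition p1 : fdist R 1 := [:: (1, c 3)].
Definition Pi (i : 'I_2) : fdist R 1 := if val i == 0%N then p0 else p1.

Lemma le_pc (a b : R) : le_p (c a) (c b) = (a <= b).
Proof.
rewrite /le_p; apply/forallP/idP => [H| H i]; first by have := H ord0; rewrite !mxE.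
by rewrite !mxE.
Qed.

End Ex.

Theorem mainTheorem14 (R : realType) :
  exists (d n : nat) (Pi : 'I_n -> fdist R d),
    (forall i, is_dist (Pi i)) /\
    exists k : 'I_n, inCDUS Pi k /\ ~ inPF Pi k.
Proof.
exists 1%N, 2%N, (@Pi R); split.
  move=> i; rewrite /Pi; case: ifP => _; split.
  - by move=> wx; rewrite !inE => /orP[] /eqP -> /=; lra.
  - by rewrite !big_cons big_nil /=; lra.
  - by move=> wx; rewrite !inE => /eqP -> /=; lra.
  - by rewrite !big_cons big_nil /=; lra.
exists ord0; split.
  move=> [lam [[lam0 lam1] [Hc [j [Hm [t Ht]]]]]].
  move: lam1; rewrite big_ord_recl big_ord1 => lam1.
  have := Hc (c R 3); rewrite /mix_cdf big_ord_recl big_ord1 /= /cdf /=.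
  rewrite !big_cons big_nil /= !le_pc.
  rewrite ler0n !ler_nat /= => Hcc.
  have h1 : lam (lift ord0 ord0) = 0.
    have := lam0 (lift ord0 ord0); have := lam0 ord0. lra.
  move: Ht; rewrite /mix_mcdf big_ord_recl big_ord1 /= h1.
  have -> : lam ord0 = 1 by lra.
  rewrite mul0r addr0 mul1r ltxx //.
move=> H; apply: H; exists (lift ord0 ord0); split.
  move=> i; rewrite /mean /= !big_cons big_nil !mxE /=; lra.
exists ord0; rewrite /mean /= !big_cons big_nil !mxE /=; lra.
Qed.
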